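(* Let $S\subseteq[12]$ be such that $\mathsf{MAIS}(G^*_S)<\alpha(G^*_{S,u})$. Then for any valid index code for the problem $\mathcal{B}^*_S$ with locality $1$, whose receivers $u_1,u_2,u_3$ observe codeword symbols indexed by $R_1,R_2,R_3$ respectively, we have $|R_i\cap R_j|=0$ for every $1\le i<j\le3$.
   Context: Index coding model. A unicast index coding problem has receivers $u_1,\dots,u_n$ and messages $\mathbf{x}_j$, each a vector in $\mathcal{A}^m$ for a finite alphabet $\mathcal{A}$ and positive integer $m$. Receiver $u_i$ demands $\mathbf{x}_j$, $j\in W_i$, and knows $\mathbf{x}_j$, $j\in K_i$, with $W_i\cap K_i=\emptyset$, the $W_i$ pairwise disjoint and every message demanded by exactly one receiver. An index code consists of an encoder mapping the messages to a codeword $\mathbf{c}\in\mathcal{A}^\ell$, subsets $R_i\subseteq[\ell]$ (receiver $u_i$ observes only $\mathbf{c}_{R_i}$), and decoders at each $u_i$ mapping $(\mathbf{c}_{R_i},\mathbf{x}_{K_i})$ to $\mathbf{x}_{W_i}$; it is valid if every receiver decodes correctly for all message values. The locality at $u_i$ is $|R_i|/(m|W_i|)$ and the locality of the code is the maximum over receivers (receivers with no demand impose no constraint). The problem $\mathcal{B}^*$ has three receivers and 12 messages with $W_1=\{1,2,3,4\}$, $W_2=\{5,6,7,8\}$, $W_3=\{9,10,11,12\}$, $K_1=\{5,6,9,10\}$, $K_2=\{1,2,9,11\}$, $K_3=\{1,3,5,7\}$. For $S\subseteq[12]$, $\mathcal{B}^*_S$ is the sub-problem with receivers $u_1,u_2,u_3$,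 messages $\mathbf{x}_j$, $j\in S$, demand sets $W_i\cap S$ and side information sets $K_i\cap S$. $G^*$ is the directed graph on $[12]$ with a directed edge $(a,b)$ iff $b\in K_i$ where $a\in W_i$; $G^*_u$ is the undirected graph on $[12]$ with $\{a,b\}$ an edge iff both $(a,b)$ and $(b,a)$ are edges of $G^*$; $G^*_S$, $G^*_{S,u}$ are the subgraphs induced by $S$. $\mathsf{MAIS}(D)$ is the maximum number of vertices of an acyclic induced subgraph of a directed graph $D$; $\alpha$ is the independence number. *)

(* Defs.v *)
From HB Require Import structures.
From mathcomp Require Import all_boot all_order all_algebra.
Set Implicit Arguments. Unset Strict Implicit. Unset Printing Implicit Defensive.
Import Order.TTheory GRing.Theory Num.Theory.

(* Messages 1..12 are represented by 'I_12 (message j+1 is the ordinal j);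
   receivers u_1,u_2,u_3 by 'I_3 (u_(i+1) is the ordinal i). *)

Definition Wn (i : nat) : seq nat :=
  match i with 1 => [:: 1; 2; 3; 4] | 2 => [:: 5; 6; 7; 8]
             | 3 => [:: 9; 10; 11; 12] | _ => [::] end.
Definition Kn (i : nat) : seq nat :=
  match i with 1 => [:: 5; 6; 9; 10] | 2 => [:: 1; 2; 9; 11]
             | 3 => [:: 1; 3; 5; 7] | _ => [::] end.

Definition W (i : 'I_3) : {set 'I_12} := [set j : 'I_12 | j.+1 \in Wn i.+1].
Definition K (i : 'I_3) : {set 'I_12} := [set j : 'I_12 | j.+1 \in Kn i.+1].

Definition Gedge : rel 'I_12 :=
  fun a b => [exists i : 'I_3, (a \in W i) && (b \in K i)].

Definition Guedge : rel 'I_12 := fun a b => Gedge a b && Gedge b a.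

Definition Gedge_on (T : {set 'I_12}) : rel 'I_12 :=
  fun a b => [&& a \in T, b \in T & Gedge a b].

Definition has_cycle (T : {set 'I_12}) : bool :=
  [exists a, exists b, Gedge_on T a b && connect (Gedge_on T) b a].

Definition acyclic (T : {set 'I_12}) : bool := ~~ has_cycle T.

Definition MAIS (S : {set 'I_12}) : nat :=
  \max_(T : {set 'I_12} | (T \subset S) && acyclic T) #|T|.

Definition independent (I : {set 'I_12}) : bool :=
  [forall a in I, forall b in I, ~~ Guedge a b].

Definition alpha (S : {set 'I_12}) : nat :=
  \max_(I : {set 'I_12} | (I \subset S) && independent I) #|I|.

Definition msgs (S : {set 'I_12}) (A : Type) (m : nat) : Type :=
  {j : 'I_12 | j \in S} -> 'I_m -> A.

Definition decoder_ok (S : {set 'I_12}) (A : Type) (m l : nat)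
    (E : msgs S A m -> 'I_l -> A) (Ri : {set 'I_l}) (i : 'I_3)
    (D : ('I_l -> A) -> msgs S A m -> msgs S A m) : Prop :=
  (forall (c c' : 'I_l -> A) (x x' : msgs S A m),
      (forall r, r \in Ri -> c r = c' r) ->
      (forall j, val j \in K i -> x j = x' j) ->
      forall j k, val j \in W i -> D c x j k = D c' x' j k) /\
  (forall (x : msgs S A m) j k, val j \in W i -> D (E x) x j k = x j k).

Definition valid_code (S : {set 'I_12}) (A : Type) (m l : nat)
    (E : msgs S A m -> 'I_l -> A) (R : 'I_3 -> {set 'I_l}) : Prop :=
  forall i : 'I_3, exists D, decoder_ok E (R i) i D.

Definition locality (S : {set 'I_12}) (m l : nat) (R : 'I_3 -> {set 'I_l})
  : rat :=
  \big[Num.max/0%R]_(i : 'I_3 | W i :&: S != set0)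
     ((#|R i|%:R : rat) / ((m * #|W i :&: S|)%:R : rat))%R.

(* Main.v *)
Require Import Defs.
From HB Require Import structures.
From mathcomp Require Import all_boot all_order all_algebra.
Set Implicit Arguments. Unset Strict Implicit. Unset Printing Implicit Defensive.
Import Order.TTheory GRing.Theory Num.Theory.

Fixpoint masks (n : nat) : seq (seq bool) :=
  if n is n'.+1 then [seq b :: s | b <- [:: true; false], s <- masks n'] else [:: [::]].
Definition I12 := iota 0 12.
Definition gfn (a b : nat) : bool := has (fun i => (a.+1 \in Wn i) && (b.+1 \in Kn i)) [:: 1; 2; 3].
Definition indl (mem : nat -> bool) : bool :=
  all (fun a => all (fun b => ~~ [&& mem a, mem b, gfn a b & gfn b a]) I12) I12.
Definition rk (p : nat) (c : nat) : nat :=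
  nth 0 (nth [::] [:: [::0;1;2]; [::0;2;1]; [::1;0;2]; [::1;2;0]; [::2;0;1]; [::2;1;0]] p) c.
Definition certl (mem : nat -> bool) : bool :=
  has (fun p => all (fun a => all (fun b => [&& mem a, mem b & gfn a b] ==> (rk p (b %/ 4) < rk p (a %/ 4))) I12) I12) (iota 0 6).
Definition sinkn (a : nat) : bool := a \in [:: 3; 7; 11].
Definition tril (t : seq nat) (mem : nat -> bool) : bool :=
  [&& all (fun a => (a \in t) ==> mem a) I12, all (fun a => mem a ==> ((a \in t) || sinkn a)) I12 &
      all (fun y => [|| y \in t, sinkn y | has (fun z => mem z && certl (fun n => (mem n || (n == y)) && (n != z))) I12]) I12].
Definition chk := all (fun bs => let mem := nth false bs in
   indl mem ==> [|| certl mem, tril [:: 1; 6; 9] mem | tril [:: 2; 5; 10] mem]) (masks 12).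

(* lazy versions for vm evaluation *)
Definition certl' (mem : nat -> bool) : bool :=
  has (fun p => all (fun a => all (fun b => if mem a then if mem b then if gfn a b then (rk p (b %/ 4) < rk p (a %/ 4)) else true else true else true) I12) I12) (iota 0 6).
Definition tril' (t : seq nat) (mem : nat -> bool) : bool :=
  if all (fun a => (a \in t) ==> mem a) I12 then
  if all (fun a => mem a ==> ((a \in t) || sinkn a)) I12 then
      all (fun y => if y \in t then true else if sinkn y then true else
         has (fun z => if mem z then certl' (fun n => (mem n || (n == y)) && (n != z)) else false) I12) I12
  else false else false.
Definition chk' := all (fun bs => let mem := nth false bs in
   if indl mem then (if certl' mem then true else if tril' [:: 1; 6; 9] mem then true else tril' [:: 2; 5; 10] mem) else true) (masks 12).
Lemma chk'_ok : chk'. Proof. vm_compute. reflexivity. Qed.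
Lemma certlE mem : certl mem = certl' mem.
Proof.
rewrite /certl /certl'; apply: eq_has => p; apply: eq_all => a; apply: eq_all => b.
by case: (mem a); case: (mem b); case: (gfn a b).
Qed.
Lemma trilE t mem : tril t mem = tril' t mem.
Proof.
rewrite /tril /tril'.
have G : forall (a b c c' : bool), c = c' -> [&& a, b & c] = (if a then if b then c' else false else false) by move=> [] [] c c' ->.
apply: G.
apply: eq_all => y; case: (y \in t) => //; case: (sinkn y) => //; rewrite !orFb.
apply: eq_has => z; case: (mem z) => //=; exact: certlE.
Qed.
Lemma chk_ok : chk.
Proof.
have := chk'_ok; rewrite /chk /chk'.
move=> H; apply/allP => bs /(allP H) /=.
rewrite certlE !trilE.
by case: (indl _) => //; case: (certl' _) => //; case: (tril' _ _).
Qed.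

Lemma gfnE (a b : 'I_12) : Gedge a b = gfn a b.
Proof.
rewrite /Gedge /gfn; apply/existsP/hasP.
- move=> [i]; rewrite !inE => /andP [ha hb]; exists i.+1; last by rewrite ha hb.
  by case: i {ha hb} => [[|[|[|]]]].
- move=> [n]; rewrite !inE => /or3P [] /eqP -> /andP [ha hb];
  [exists (@Ordinal 3 0 isT) | exists (@Ordinal 3 1 isT) | exists (@Ordinal 3 2 isT)];
  by apply/andP; split; rewrite in_set.
Qed.

Lemma ordI12 n : n \in I12 -> exists x : 'I_12, n = x.
Proof. move=> h; have hn : n < 12 by rewrite mem_iota in h. by exists (Ordinal hn). Qed.

Lemma inI12 (x : 'I_12) : (x : nat) \in I12.
Proof. by rewrite mem_iota ltn_ord. Qed.

Lemma indep_bridge (I : {set 'I_12}) (mem : nat -> bool) :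
  (forall x : 'I_12, mem x = (x \in I)) -> independent I -> indl mem.
Proof.
move=> Hm /forallP HI; apply/allP => a /ordI12 [x ->]; apply/allP => b /ordI12 [y ->].
rewrite !Hm -!gfnE; apply/negP => /and4P [hx hy e1 e2].
have := HI x; rewrite hx /= => /forallP /(_ y); rewrite hy /= /Guedge e1 e2. done.
Qed.

Lemma cert_bridge (T : {set 'I_12}) (mem : nat -> bool) :
  (forall x : 'I_12, mem x = (x \in T)) -> certl mem -> acyclic T.
Proof.
move=> Hm /hasP [p _ /allP Hp].
pose rank (x : 'I_12) := rk p (x %/ 4).
have He : forall x y, Gedge_on T x y -> rank y < rank x.
  move=> x y /and3P [hx hy e]; have /allP := Hp x (inI12 x).
  by move=> /(_ y (inI12 y)); rewrite !Hm hx hy -gfnE e.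
have Hc : forall x y, connect (Gedge_on T) x y -> rank y <= rank x.
  move=> x y /connectP [s pth ->]; elim: s x pth => [|z s IH] x //= /andP [exz pz].
  exact: leq_trans (IH z pz) (ltnW (He _ _ exz)).
rewrite /acyclic /has_cycle; apply/negP => /existsP [a /existsP [b /andP [eab cba]]].
have h1 := He _ _ eab; have h2 := Hc _ _ cba.
by move: (leq_ltn_trans h2 h1); rewrite ltnn.
Qed.

Lemma masks_all s : s \in masks (size s).
Proof.
elim: s => [|b s IH] //=.
by case: b; rewrite !mem_cat ?orbF; apply/orP; [left|right]; apply: map_f.
Qed.

Lemma tri_case (S I : {set 'I_12}) (mem : nat -> bool) (t : seq nat) :
  (forall x : 'I_12, mem x = (x \in I)) -> I \subset S -> MAIS S < #|I| ->
  tril t mem ->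
  forall x : 'I_12, ((val x \in t) ==> (x \in S)) && ((x \in S) ==> ((val x \in t) || sinkn x)).
Proof.
move=> Hm IS Hlt /and3P [/allP h1 /allP h2 /allP h3] x; apply/andP; split.
  apply/implyP => hx; have := h1 x (inI12 x); rewrite hx Hm /= => xI; exact: (subsetP IS).
apply/implyP => xS; case: (boolP ((val x \in t) || sinkn x)) => // hn.
have xI : x \notin I.
  apply/negP => xI; have := h2 x (inI12 x); rewrite Hm xI /= => h; by rewrite h in hn.
have := h3 x (inI12 x); move: (hn) => /norP [n1 n2]; rewrite (negbTE n1) (negbTE n2) !orFb => /hasP [z /ordI12 [z' ->] /andP [hz hcert]].
pose T := (x |: I) :\ z'.
have HT : acyclic T.
  apply: (cert_bridge _ hcert) => w; rewrite !inE Hm.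
  by rewrite andbC orbC.
have TS : T \subset S.
  apply/subsetP => w; rewrite !inE => /andP [_ /orP [/eqP -> //| wI]]; exact: (subsetP IS).
have cT : #|T| = #|I|.
  have zin : z' \in x |: I by rewrite !inE -Hm hz orbT.
  have := cardsD1 z' (x |: I); rewrite zin cardsU1 xI /=.
  by move=> /eqP; rewrite eqn_add2l => /eqP ->.
have := @leq_bigmax_cond _ (fun U : {set 'I_12} => (U \subset S) && acyclic U) (fun U => #|U|) T.
rewrite TS HT => /(_ isT) h; rewrite -/(MAIS S) in h.
by move: (leq_ltn_trans h Hlt); rewrite cT ltnn.
Qed.

Lemma struct (S : {set 'I_12}) : MAIS S < alpha S ->
  exists t : seq nat, ((t == [:: 1; 6; 9]) || (t == [:: 2; 5; 10])) &&
    [forall x : 'I_12, ((val x \in t) ==> (x \in S)) && ((x \in S) ==> ((val x \in t) || sinkn x))].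
Proof.
move=> Hlt.
have [I /andP [IS Iind] Imax] : {I : {set 'I_12} | (I \subset S) && independent I & alpha S = #|I|}.
  apply: (@eq_bigmax_cond _ (fun I : {set 'I_12} => (I \subset S) && independent I) (fun I => #|I|)).
  apply/card_gt0P; exists set0; rewrite /in_mem /= sub0set /=.
  by apply/forallP => a; rewrite inE.
rewrite Imax in Hlt.
pose bs := mkseq (fun n => insubd (ord0 : 'I_12) n \in I) 12.
have Hm : forall x : 'I_12, nth false bs x = (x \in I).
  by move=> x; rewrite nth_mkseq ?ltn_ord // valKd.
have hb : bs \in masks 12 by have := masks_all bs; rewrite size_mkseq.
have := allP chk_ok bs hb; rewrite /= (indep_bridge Hm Iind) /= => /or3P [hc | ht | ht].
- have Iac := cert_bridge Hm hc.
  have := @leq_bigmax_cond _ (fun U : {set 'I_12} => (U \subset S) && acyclic U) (fun U => #|U|) I.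
  rewrite IS Iac => /(_ isT) h; rewrite -/(MAIS S) in h.
  by move: (leq_ltn_trans h Hlt); rewrite ltnn.
- exists [:: 1; 6; 9]; apply/andP; split => //; apply/forallP; exact: (tri_case Hm IS Hlt ht).
- exists [:: 2; 5; 10]; apply/andP; split => //; apply/forallP; exact: (tri_case Hm IS Hlt ht).
Qed.

Definition yof (S : {set 'I_12}) (A : Type) (m : nat) (i : 'I_3) (x0 : msgs S A m)
  (p : {ffun {j : 'I_12 | j \in W i :&: S} * 'I_m -> A}) : msgs S A m :=
  fun j k => match (insub (val j) : option {j : 'I_12 | j \in W i :&: S}) with
             | Some j' => p (j', k) | None => x0 j k end.

Lemma yof_out (S : {set 'I_12}) (A : finType) m i x0 p (j : {j : 'I_12 | j \in S}) :
  val j \notin W i -> @yof S A m i x0 p j = x0 j.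
Proof. by move=> h; rewrite /yof insubN // inE (negbTE h). Qed.

Lemma yof_in (S : {set 'I_12}) (A : finType) m i x0 p (j : {j : 'I_12 | j \in S}) (j' : {j : 'I_12 | j \in W i :&: S}) k :
  val j = val j' -> @yof S A m i x0 p j k = p (j', k).
Proof.
move=> e; rewrite /yof; case: insubP => [u _ hu | hn].
  by congr (p (_, k)); apply: val_inj; rewrite hu e.
by move: (valP j'); rewrite -e (negbTE hn).
Qed.

Lemma WK_disj (i : 'I_3) (x : 'I_12) : x \in K i -> x \notin W i.
Proof.
have H : all (fun i => all (fun x => (x.+1 \in Kn i.+1) ==> (x.+1 \notin Wn i.+1)) (iota 0 12)) (iota 0 3) by [].
have hi : (i : nat) \in iota 0 3 by rewrite mem_iota ltn_ord.
have hx : (x : nat) \in iota 0 12 by rewrite mem_iota ltn_ord.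
rewrite !in_set; move/allP: H => /(_ i hi) /allP /(_ x hx) /implyP; exact.
Qed.


Lemma yof_inj (S : {set 'I_12}) (A : finType) m i x0 p p' :
  (forall j k, val j \in W i -> @yof S A m i x0 p j k = yof x0 p' j k) -> p = p'.
Proof.
move=> h; apply/ffunP => [[j' k]].
have hW : val j' \in W i by move: (valP j'); rewrite inE => /andP [].
have hS : val j' \in S by move: (valP j'); rewrite inE => /andP [].
pose j : {j : 'I_12 | j \in S} := exist _ (val j') hS.
have := h j k hW; rewrite !(@yof_in _ _ _ _ _ _ j j') //.
Qed.

Lemma decF (S : {set 'I_12}) (A : finType) m l (E : msgs S A m -> 'I_l -> A) Ri i D x0 p j k :
  decoder_ok E Ri i D -> val j \in W i -> D (E (yof x0 p)) x0 j k = @yof S A m i x0 p j k.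
Proof.
move=> [Hl Hc] hj; rewrite -(Hc (yof x0 p) j k hj); apply: Hl => // j0 hK.
by rewrite yof_out //; apply: WK_disj.
Qed.

Definition Fmap (S : {set 'I_12}) (A : finType) m l (E : msgs S A m -> 'I_l -> A) (Ri : {set 'I_l}) i x0
  (p : {ffun {j : 'I_12 | j \in W i :&: S} * 'I_m -> A}) : {ffun {r : 'I_l | r \in Ri} -> A} :=
  [ffun r => E (yof x0 p) (val r)].

Lemma F_inj (S : {set 'I_12}) (A : finType) m l (E : msgs S A m -> 'I_l -> A) Ri i D x0 :
  decoder_ok E Ri i D -> injective (@Fmap S A m l E Ri i x0).
Proof.
move=> Hd p p' h; apply: (yof_inj (x0 := x0)) => j k hj.
rewrite -!(decF _ _ _ Hd hj); case: Hd => Hl _; apply: Hl => // r hr.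
by have := congr1 (fun f : {ffun {r : 'I_l | r \in Ri} -> A} => f (exist _ r hr)) h; rewrite !ffunE.
Qed.

Lemma F_onto (S : {set 'I_12}) (A : finType) m l (E : msgs S A m -> 'I_l -> A) Ri i D x0 :
  decoder_ok E Ri i D -> 0 < #|A| -> #|Ri| <= m * #|W i :&: S| ->
  forall q, exists p, @Fmap S A m l E Ri i x0 p = q.
Proof.
move=> Hd A0 loc q.
have := inj_card_onto (F_inj (x0:=x0) Hd) _ q.
rewrite !card_ffun card_prod !card_sig card_ord.
have e1 : #|[pred x | x \in W i :&: S]| = #|W i :&: S| by apply: eq_card.
have e2 : #|[pred x | x \in Ri]| = #|Ri| by apply: eq_card.
rewrite mulnC in loc; rewrite e1 e2 leq_pexp2l // => /(_ isT) /codomP [p ->]; by exists p.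
Qed.

Lemma dep (S : {set 'I_12}) (A : finType) m l (E : msgs S A m -> 'I_l -> A) Ri i D :
  decoder_ok E Ri i D -> 0 < #|A| -> #|Ri| <= m * #|W i :&: S| ->
  forall x x' : msgs S A m, (forall j, val j \in W i :|: K i -> x j = x' j) ->
  forall r, r \in Ri -> E x r = E x' r.
Proof.
move=> Hd A0 loc x x' hxx' r hr.
pose q := [ffun r : {r : 'I_l | r \in Ri} => E x (val r)].
pose q' := [ffun r : {r : 'I_l | r \in Ri} => E x' (val r)].
have [p hp] := F_onto x Hd A0 loc q.
have [p' hp'] := F_onto x Hd A0 loc q'.
have Hd' := Hd; case: Hd' => Hl Hc.
have pp : p = p'.
  apply: (yof_inj (x0 := x)) => j k hj.
  rewrite -!(decF _ _ _ Hd hj).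
  have -> : D (E (yof x p)) x j k = D (E x) x j k.
    apply: Hl => // r0 hr0.
    by have := congr1 (fun f : {ffun {r : 'I_l | r \in Ri} -> A} => f (exist _ r0 hr0)) hp; rewrite !ffunE.
  have -> : D (E (yof x p')) x j k = D (E x') x' j k.
    apply: Hl; last exact: hj.
      move=> r0 hr0.
      by have := congr1 (fun f : {ffun {r : 'I_l | r \in Ri} -> A} => f (exist _ r0 hr0)) hp'; rewrite !ffunE.
    move=> j0 hj0; apply: hxx'; by rewrite inE hj0 orbT.
  by rewrite Hc // Hc // (hxx' j) // inE hj.
have := congr1 (fun f : {ffun {r : 'I_l | r \in Ri} -> A} => f (exist _ r hr)) hp.
have := congr1 (fun f : {ffun {r : 'I_l | r \in Ri} -> A} => f (exist _ r hr)) hp'.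
by rewrite pp !ffunE => -> ->.
Qed.

Lemma onto_val (S : {set 'I_12}) (A : finType) m l (E : msgs S A m -> 'I_l -> A) Ri i D x0 :
  decoder_ok E Ri i D -> 0 < #|A| -> #|Ri| <= m * #|W i :&: S| ->
  forall r, r \in Ri -> forall a1 : A, exists p, E (@yof S A m i x0 p) r = a1.
Proof.
move=> Hd A0 loc r hr a1.
have [p hp] := F_onto x0 Hd A0 loc [ffun _ => a1].
exists p; have := congr1 (fun f : {ffun {r : 'I_l | r \in Ri} -> A} => f (exist _ r hr)) hp.
by rewrite !ffunE.
Qed.

Lemma loc_bound (S : {set 'I_12}) m l (R : 'I_3 -> {set 'I_l}) (c : 'I_3) :
  locality S m R = 1%R -> 0 < m -> W c :&: S != set0 -> #|R c| <= m * #|W c :&: S|.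
Proof.
move=> H m0 hc.
have h : ((#|R c|%:R : rat) / ((m * #|W c :&: S|)%:R) <= locality S m R)%R.
  rewrite /locality. exact: (le_bigmax_cond 0%R (fun c => ((#|R c|%:R : rat) / ((m * #|W c :&: S|)%:R))%R) hc).
have pos : (0 < (m * #|W c :&: S|)%:R :> rat)%R.
  by rewrite ltr0n muln_gt0 m0 /= card_gt0.
by move: h; rewrite H ler_pdivrMr // mul1r ler_nat.
Qed.

Unset Implicit Arguments.

Theorem lemma5 (S : {set 'I_12}) (A : finType) (m l : nat)
    (E : msgs S A m -> 'I_l -> A) (R : 'I_3 -> {set 'I_l}) :
  MAIS S < alpha S ->
  0 < m ->
  1 < #|A| ->
  valid_code E R ->
  locality S m R = 1%R ->
  forall i j : 'I_3, i < j -> #|R i :&: R j| = 0.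
Proof.
move=> Hlt m0 A1 Hv Hloc i j ij.
have A0 : 0 < #|A| by apply: ltn_trans A1.
have [t /andP [tt /forallP Ht]] := struct Hlt.
have F1 : forall c : 'I_3, W c :&: S != set0.
  move=> c.
  have H : all (fun c => has (fun n => (n \in t) && (n.+1 \in Wn c.+1)) (iota 0 12)) (iota 0 3).
    by case/orP: tt => /eqP ->.
  have hc : (c : nat) \in iota 0 3 by rewrite mem_iota ltn_ord.
  move/allP: H => /(_ c hc) /hasP [n /ordI12 [x ->] /andP [hn hw]].
  apply/set0Pn; exists x; rewrite in_setI.
  have -> : x \in W c by rewrite in_set.
  by have := Ht x => /andP [/implyP /(_ hn)].
have [k [kij kK]] : exists k : 'I_3, ((k == i) || (k == j)) /\
    (forall s : 'I_12, s \in S -> s \in W i :|: K i -> s \in W j :|: K j -> s \in K k).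
  have H : all (fun i => all (fun j => (i < j) ==> has (fun k => [&& (k == i) || (k == j), k < 3 &
      all (fun s => ((s \in t) || sinkn s) ==> ((s.+1 \in Wn i.+1) || (s.+1 \in Kn i.+1)) ==>
          ((s.+1 \in Wn j.+1) || (s.+1 \in Kn j.+1)) ==> (s.+1 \in Kn k.+1)) (iota 0 12)]) (iota 0 3))
       (iota 0 3)) (iota 0 3).
    by case/orP: tt => /eqP ->.
  have hi : (i : nat) \in iota 0 3 by rewrite mem_iota ltn_ord.
  have hj : (j : nat) \in iota 0 3 by rewrite mem_iota ltn_ord.
  move/allP: H => /(_ i hi) /allP /(_ j hj); rewrite ij implyTb => /hasP [k _ /and3P [kij k3 /allP Hs]].
  exists (Ordinal k3); split => // s sS.
  have := Ht s => /andP [_ /implyP /(_ sS) hs].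
  have := Hs s (inI12 s); rewrite hs /= !in_setU !in_set => /implyP h1 /h1 /implyP h2 /h2.
  done.
apply/eqP; rewrite cards_eq0 -subset0; apply/subsetP => r; rewrite inE => /andP [ri rj]; exfalso.
have [Di Hdi] := Hv i; have [Dj Hdj] := Hv j; have [Dk Hdk] := Hv k.
have li := loc_bound Hloc m0 (F1 i); have lj := loc_bound Hloc m0 (F1 j).
have lk := loc_bound Hloc m0 (F1 k).
have [a0 _] : exists a0 : A, true by move/card_gt0P: A0 => [a0 _]; exists a0.
pose x0 : msgs S A m := fun _ _ => a0.
have [a1 ha1] : exists a1 : A, a1 != E x0 r.
  have : 0 < #|predC1 (E x0 r)| by rewrite cardC1 -ltnS (ltn_predK A1).
  by move/card_gt0P => [a1 ha1]; exists a1.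
have rk : r \in R k by case/orP: kij => /eqP ->.
have [p hp] := onto_val x0 Hdk A0 lk rk a1.
pose y := @yof S A m k x0 p.
pose z : msgs S A m := fun s => if val s \in W i :|: K i then y s else x0 s.
have e1 : E y r = E z r.
  apply: (dep Hdi A0 li) => // s hs; by rewrite /z hs.
have e2 : E z r = E x0 r.
  apply: (dep Hdj A0 lj) => // s hs; rewrite /z; case: ifP => // hs'.
  rewrite /y yof_out //; apply: WK_disj; apply: kK => //; exact: (valP s).
by move: ha1; rewrite -hp -/y e1 e2 eqxx.
Qed.
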